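(* Consider any fixed training set $S_{\mathrm{e2e}}=\{(x^{(i)},y^{(i)}):i\in[m]\}$ with $y^{(i)}=h_*(x^{(i)})$ for some $h_*\in\mathrm{e2e}^T(\mathcal F)$. There is a universal constant $c>0$ such that for any $\delta\in(0,1)$, the Boosting Algorithm invoked with per-thinker budget $\mathsf M_\star=c\,\mathrm{VCdim}(\mathrm{e2e}^T(\mathcal F))$, with the thinkers $f_{k,\ell}$ chosen adversarially (each $f_{k,\ell}\in\mathcal F$ with $\mathrm{e2e}^T_{f_{k,\ell}}\equiv h_*$, possibly depending on the whole history and on the current sampled index set $\mathcal S_{k,\ell}$), satisfies, with probability at least $1-\delta/2$ over its internal randomness of subsampling, simultaneously for all $k\in[K]$: $$\epsilon_k:=\Pr_{i\sim D^{(k)}}\big[\mathrm{e2e}^T_{\hat f_k}(x^{(i)})\ne h_*(x^{(i)})\big]\le0.25.$$ Moreover, in the relaxed protocol where each $f_{k,\ell}$ is fixed by the adversary before observing $\mathcal S_{k,\ell}$, the same guarantee holds with $\mathsf M_\star=c\,\mathrm{VCdim}(\mathcal L^T_{\mathrm{CoT}}(\mathcal F))=O(\mathrm{VCdim}(\mathcal F)\log T)$.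
   Context: Autoregressive generation: for $f:\{0,1\}^*\to\{0,1\}$, $\bar f(x)=(x,f(x))$; $\mathrm{e2e}^T_f(x)$ is the last bit of $\bar f^{\circ T}(x)$ and $\mathrm{CoT}^T_f(x)=(\mathrm{e2e}^1_f(x),\dots,\mathrm{e2e}^T_f(x))$; $\mathrm{e2e}^T(\mathcal F)=\{\mathrm{e2e}^T_f:f\in\mathcal F\}$. $\mathcal L^T_{\mathrm{CoT}}(\mathcal F)=\{(x,z)\mapsto\mathbb 1\{z\ne\mathrm{CoT}^T_f(x)\}:f\in\mathcal F\}$; $\mathrm{VCdim}(\mathcal F)$ is on $\mathcal X\times\{0,1\}^T$. Boosting Algorithm (input $S_{\mathrm{e2e}}$, $K$, $\mathsf M_\star$, $\delta$): $D^{(1)}$ uniform on $[m]$. For $k=1,\dots,K$: for $\ell=1,\dots,\log(2K/\delta)$: draw $\mathcal S_{k,\ell}$ consisting of $\mathsf M_\star$ indices i.i.d. from $D^{(k)}$; obtain $\mathrm{CoT}^T_{f_{k,\ell}}(x^{(i)})$ for $i\in\mathcal S_{k,\ell}$ from an adversarially chosen thinker $f_{k,\ell}$; find $\hat f_{k,\ell}\in\mathcal F$ whose CoTs agree with all observed CoTs; let $\epsilon_{k,\ell}=\sum_iD^{(k)}_i\mathbb 1[\mathrm{e2e}^T_{\hat f_{k,\ell}}(x^{(i)})\ne y^{(i)}]$ and stop the inner loop if $\epsilon_{k,\ell}\le0.25$. $\hat f_k$ is the last $\hat f_{k,\ell}$. If its error $\epsilon_k=0$ the algorithm stops; otherwise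 $\alpha_k=\frac12\log\frac{1-\epsilon_k}{\epsilon_k}$ and $D^{(k+1)}_i\propto D^{(k)}_ie^{\pm\alpha_k}$ ($+$ if $\hat f_k$ errs end-to-end on $i$, $-$ otherwise), normalized. *)

(* Defs.v *)
From Stdlib Require Import Reals.
From mathcomp Require Import all_boot all_order all_algebra.
From mathcomp Require Import Rstruct.
Set Implicit Arguments. Unset Strict Implicit. Unset Printing Implicit Defensive.
Import Order.TTheory GRing.Theory Num.Theory.
Local Open Scope ring_scope.

Definition fbar (f : seq bool -> bool) (x : seq bool) : seq bool := rcons x (f x).
Definition e2e (T : nat) (f : seq bool -> bool) (x : seq bool) : bool :=
  last false (iter T (fbar f) x).
Definition CoT (T : nat) (f : seq bool -> bool) (x : seq bool) : T.-tuple bool :=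
  [tuple e2e (i.+1) f x | i < T].

Definition e2e_class (T : nat) (F : (seq bool -> bool) -> Prop) :
  (seq bool -> bool) -> Prop :=
  fun h => exists f, F f /\ h = e2e T f.
Definition Lcot_class (T : nat) (F : (seq bool -> bool) -> Prop) :
  (seq bool * T.-tuple bool -> bool) -> Prop :=
  fun h => exists f, F f /\ h = (fun p => p.2 != CoT T f p.1).
Arguments Lcot_class : clear implicits.

Definition shatters (U : eqType) (dom : U -> Prop) (H : (U -> bool) -> Prop)
  (A : seq U) : Prop :=
  [/\ uniq A, (forall u, u \in A -> dom u) &
      forall lab : U -> bool, exists h, H h /\ forall u, u \in A -> h u = lab u].
Definition VCdim_is (U : eqType) (dom : U -> Prop) (H : (U -> bool) -> Prop)
  (d : nat) : Prop :=
  (exists A, size A = d /\ shatters dom H A) /\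
  (forall A, shatters dom H A -> (size A <= d)%N).

Section Boosting.
Variables (m M T : nat) (xs : 'I_m -> seq bool) (ys : 'I_m -> bool).

(* a sampled multiset S_{k,l} of M indices, and the observed CoTs on it *)
Definition sample := {ffun 'I_M -> 'I_m}.
Definition observation := {ffun 'I_M -> T.-tuple bool}.
Definition history := seq (sample * observation).

(* E_{S ~ D^M} [V S]  (M indices drawn i.i.d. from D) *)
Definition expect_sample (D : 'I_m -> R) (V : sample -> R) : R :=
  \sum_(S : sample) (\prod_(j < M) D (S j)) * V S.

Definition e2e_err (g : seq bool -> bool) (i : 'I_m) : bool :=
  e2e T g (xs i) != ys i.

Definition weighted_err (D : 'I_m -> R) (g : seq bool -> bool) : R :=
  \sum_(i < m) D i * (e2e_err g i)%:R.

(* AdaBoost reweighting with alpha = 1/2 log((1-eps)/eps) *)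
Definition reweight (D : 'I_m -> R) (g : seq bool -> bool) : 'I_m -> R :=
  let eps := weighted_err D g in
  let alpha := ln ((1 - eps) / eps) / 2 in
  let w := fun i => D i * exp (if e2e_err g i then alpha else - alpha) in
  fun i => w i / \sum_(k < m) w k.

(* adversary: chooses the thinker f_{k,l} from the history and the current
   sample set; learner: chooses hat f_{k,l} from the history, the current
   sample set and the observed CoTs. *)
Variable adv : history -> sample -> (seq bool -> bool).
Variable lrn : history -> sample -> observation -> (seq bool -> bool).
Variable L : nat. (* number of inner iterations *)

(* inner loop with l remaining tries; [cont] continues with hat f_k,
   eps_k and the updated history once eps_{k,l} <= 1/4.  If all tries fail,
   hat f_k has eps_k > 1/4 and the event of interest fails (value 0). *)
Fixpoint inner (l : nat) (D : 'I_m -> R) (hist : history)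
  (cont : (seq bool -> bool) -> R -> history -> R) : R :=
  match l with
  | 0 => 0
  | l'.+1 => expect_sample D (fun S =>
      let f := adv hist S in
      let o : observation := [ffun j => CoT T f (xs (S j))] in
      let fh := lrn hist S o in
      let hist' := rcons hist (S, o) in
      let eps := weighted_err D fh in
      if eps <= 1 / 4 then cont fh eps hist' else inner l' D hist' cont)
  end.

(* outer loop with n remaining rounds: probability that every executed
   round k has eps_k <= 1/4. *)
Fixpoint outer (n : nat) (D : 'I_m -> R) (hist : history) : R :=
  match n with
  | 0 => 1
  | n'.+1 => inner L D hist (fun fh eps hist' =>
      if eps == 0 then 1 else outer n' (reweight D fh) hist')
  end.

Definition boost_success_prob (K : nat) : R :=
  outer K (fun _ => 1 / m%:R) [::].

End Boosting.

Definition inner_iters (K : nat) (delta : R) : nat :=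
  `|Num.ceil (ln (2 * K%:R / delta))|%N.
Definition budget (c : R) (d : nat) : nat := `|Num.ceil (c * d%:R)|%N.

(* Main.v *)
Require Import Defs.
From Stdlib Require Import Reals.
From mathcomp Require Import all_boot all_order all_algebra.
From mathcomp Require Import Rstruct.
From mathcomp Require Import boolp.
From mathcomp Require Import ring lra zify.
Set Implicit Arguments. Unset Strict Implicit. Unset Printing Implicit Defensive.
Import Order.TTheory GRing.Theory Num.Theory.
Local Open Scope ring_scope.

Definition distr (m : nat) (D : 'I_m -> R) := (forall i, 0 <= D i) /\ \sum_i D i = 1.

Lemma sum_prod (m M : nat) (f : 'I_M -> 'I_m -> R) :
  \sum_(S : {ffun 'I_M -> 'I_m}) \prod_j f j (S j) = \prod_j \sum_i f j i.
Proof. by rewrite bigA_distr_bigA. Qed.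

Lemma wt_ge0 m M (D : 'I_m -> R) (S : {ffun 'I_M -> 'I_m}) :
  distr D -> 0 <= \prod_(j < M) D (S j).
Proof. by case=> D0 _; apply: prodr_ge0 => j _. Qed.

Lemma wt_sum m M (D : 'I_m -> R) : distr D ->
  \sum_(S : {ffun 'I_M -> 'I_m}) \prod_(j < M) D (S j) = 1.
Proof.
case=> _ D1; rewrite (sum_prod (fun _ i => D i)).
by rewrite big1 // => j _; rewrite D1.
Qed.

Lemma wt_marg m M (D : 'I_m -> R) (x : 'I_m -> R) (j0 : 'I_M) : distr D ->
  \sum_(S : {ffun 'I_M -> 'I_m}) (\prod_(j < M) D (S j)) * x (S j0)
  = \sum_i D i * x i.
Proof.
case=> _ D1.
transitivity (\sum_(S : {ffun 'I_M -> 'I_m})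
   \prod_j (D (S j) * (if j == j0 then x (S j) else 1))).
  apply: eq_bigr => S _; rewrite big_split /=; congr (_ * _).
  by rewrite (bigD1 j0) //= eqxx big1 ?mulr1 // => j /negbTE ->.
rewrite (sum_prod (fun j i => D i * (if j == j0 then x i else 1))).
rewrite (bigD1 j0) //= [X in _ * X]big1 ?mulr1.
  by apply: eq_bigr => i _; rewrite eqxx.
by move=> j /negbTE ->; under eq_bigr do rewrite mulr1; rewrite D1.
Qed.

Lemma reweight_distr m T xs ys (D : 'I_m -> R) g :
  distr D -> distr (reweight T xs ys D g).
Proof.
case=> D0 D1; rewrite /reweight /=.
set a := ln _ / 2.
set w := fun i => D i * exp (if e2e_err T xs ys g i then a else - a).
have w0 : forall i, 0 <= w i.
  move=> i; rewrite /w mulr_ge0 //; apply: ltW; apply/RltP; exact (exp_pos _).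
have W0 : \sum_k w k != 0.
  apply/eqP => H0.
  have H := psumr_eq0P (fun i _ => w0 i) H0.
  have : \sum_i D i = 0.
    rewrite big1 // => i _; have := H i isT; rewrite /w => /eqP.
    rewrite mulf_eq0 => /orP[/eqP //|/eqP E].
    have := exp_pos (if e2e_err T xs ys g i then a else - a).
    by rewrite E => /RltP; rewrite ltxx.
  by rewrite D1 => /eqP; rewrite oner_eq0.
split.
  move=> i; apply: divr_ge0; [exact: w0 | apply: sumr_ge0 => k _; exact: w0].
by rewrite -mulr_suml divff.
Qed.

Section Boost.
Variables (m M T : nat) (xs : 'I_m -> seq bool) (ys : 'I_m -> bool).
Variables (adv : history m M T -> sample m M -> (seq bool -> bool))
          (lrn : history m M T -> sample m M -> observation M T -> (seq bool -> bool)).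
Definition obs hist (S : sample m M) : observation M T :=
  [ffun j => CoT T (adv hist S) (xs (S j))].
Definition badS D hist (S : sample m M) : bool :=
  ~~ (weighted_err T xs ys D (lrn hist S (obs hist S)) <= 1/4).
Variable q : R.
Hypothesis q0 : 0 <= q.
Hypothesis hq : forall D hist, distr D ->
  expect_sample D (fun S => (badS D hist S)%:R) <= q.

Lemma inner_lb l D hist cont a : distr D -> a <= 1 ->
  (forall fh e h, a <= cont fh e h) ->
  a - q ^+ l <= inner xs ys adv lrn l D hist cont.
Proof.
move=> dD a1 hc; elim: l hist => [|l IH] hist /=.
  by rewrite expr0 subr_le0.
have hb := hq hist dD; move: hb; rewrite /expect_sample => hb.
apply: (@le_trans _ _ (\sum_(S : sample m M) (\prod_(j < M) D (S j)) *
     (a - q ^+ l * (badS D hist S)%:R))).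
  under eq_bigr do rewrite mulrBr (mulrCA _ (q ^+ l)).
  rewrite sumrB -mulr_suml -mulr_sumr wt_sum // mul1r.
  rewrite lerD2l lerN2 exprSr; apply: ler_wpM2l => //; exact: exprn_ge0.
apply: ler_sum => S _; apply: ler_wpM2l; first exact: wt_ge0.
rewrite /badS /obs; case: ifP => h /=.
  by rewrite mulr0 subr0.
by rewrite mulr1; apply: IH.
Qed.

Lemma outer_lb L n D hist : distr D ->
  1 - n%:R * q ^+ L <= outer xs ys adv lrn L n D hist.
Proof.
elim: n D hist => [|n IH] D hist dD /=.
  by rewrite mul0r subr0.
have -> : 1 - n.+1%:R * q ^+ L = (1 - n%:R * q ^+ L) - q ^+ L.
  by rewrite mulrSr mulrDl mul1r opprD addrA.
apply: inner_lb => //.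
  by rewrite gerBl mulr_ge0 // exprn_ge0.
move=> fh e h; case: ifP => _.
  by rewrite gerBl mulr_ge0 // exprn_ge0.
by apply: IH; apply: reweight_distr.
Qed.
End Boost.


Section Pajor.
Variable Pt : finType.
Definition shat (P : {set {ffun Pt -> bool}}) (A : {set Pt}) : bool :=
  [forall g : {ffun Pt -> bool}, [exists q in P, [forall x in A, q x == g x]]].

Lemma shat_mono (P P' : {set {ffun Pt -> bool}}) (A : {set Pt}) :
  P \subset P' -> shat P A -> shat P' A.
Proof.
move=> sPP' /forallP H; apply/forallP => g.
have /existsP[q /andP[qP qg]] := H g.
by apply/existsP; exists q; rewrite (subsetP sPP').
Qed.

Lemma shat_const (P : {set {ffun Pt -> bool}}) (A : {set Pt}) x b :
  (forall q, q \in P -> q x = b) -> x \in A -> ~~ shat P A.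
Proof.
move=> Hb xA; apply/negP => /forallP /(_ [ffun _ => ~~ b]) /existsP[q /andP[qP /forallP /(_ x)]].
by rewrite xA ffunE Hb //=; case: (b).
Qed.

Lemma pajor (P : {set {ffun Pt -> bool}}) : (#|P| <= #|[set A | shat P A]|)%N.
Proof.
have [n] := ubnP #|P|; elim: n P => // n IH P; rewrite ltnS => Pn.
case: (leqP #|P| 1) => [P1|/card_gt1P[q1 [q2 [q1P q2P q12]]]].
  case: (posnP #|P|) => [-> //|/card_gt0P[q0 q0P]].
  apply: (leq_trans P1); apply/card_gt0P; exists set0; rewrite inE.
  by apply/forallP => g; apply/existsP; exists q0; rewrite q0P; apply/forallP => x; rewrite inE.
have [x qx] : exists x, q1 x != q2 x.
  apply/existsP; apply: contraR q12 => /existsPn H; apply/eqP/ffunP => x.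
  by have := H x; rewrite negbK => /eqP.
set B := [set q : {ffun Pt -> bool} | q x].
set P1 := P :&: B; set P0 := P :\: B.
have cP : #|P| = (#|P1| + #|P0|)%N by rewrite cardsID.
have P1n : (0 < #|P1|)%N.
  apply/card_gt0P; case h: (q1 x); [exists q1 | exists q2];
  rewrite !inE ?q1P ?q2P ?h //; by move: qx; rewrite h; case: (q2 x).
have P0n : (0 < #|P0|)%N.
  apply/card_gt0P; case h: (q1 x); [exists q2 | exists q1];
  rewrite !inE ?q1P ?q2P ?h //; by move: qx; rewrite h; case: (q2 x).
have IH1 := IH P1 (leq_trans (leq_trans (leqnn _) _) Pn).
have IH0 := IH P0 (leq_trans (leq_trans (leqnn _) _) Pn).
have {IH1} IH1 : (#|P1| <= #|[set A | shat P1 A]|)%N by apply: IH1; lia.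
have {IH0} IH0 : (#|P0| <= #|[set A | shat P0 A]|)%N by apply: IH0; lia.
set S0 := [set A | shat P0 A]; set S1 := [set A | shat P1 A].
set S := [set A | shat P A].
have sP1 : P1 \subset P by apply/subsetP => q; rewrite !inE => /andP[].
have sP0 : P0 \subset P by apply/subsetP => q; rewrite !inE => /andP[].
have c1 : forall q, q \in P1 -> q x = true by move=> q; rewrite !inE => /andP[].
have c0 : forall q, q \in P0 -> q x = false by move=> q; rewrite !inE => /andP[/negbTE].
set I := [set x |: A | A in S0 :&: S1].
have xnot : forall A, A \in S0 :&: S1 -> x \notin A.
  move=> A; rewrite !inE => /andP[h0 _]; apply/negP => xA.
  by have := shat_const c0 xA; rewrite h0.
have cI : #|I| = #|S0 :&: S1|.
  apply: card_in_imset => A A' hA hA' E.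
  by rewrite -(setU1K (xnot _ hA)) E setU1K // xnot.
have sU : S0 :|: S1 \subset S.
  apply/subsetP => A; rewrite !inE => /orP[] h.
    exact: shat_mono sP0 h.
  exact: shat_mono sP1 h.
have sI : I \subset S.
  apply/subsetP => A' /imsetP[A hA ->]; move: (hA); rewrite !inE => /andP[/forallP h0 /forallP h1].
  apply/forallP => g; case gx: (g x).
    have /existsP[q /andP[qP /forallP qg]] := h1 g.
    apply/existsP; exists q; rewrite (subsetP sP1) //=; apply/forallP => y.
    rewrite !inE; case: eqP => [->|_] /=; first by rewrite c1 // gx.
    exact: qg.
  have /existsP[q /andP[qP /forallP qg]] := h0 g.
  apply/existsP; exists q; rewrite (subsetP sP0) //=; apply/forallP => y.
  rewrite !inE; case: eqP => [->|_] /=; first by rewrite c0 // gx.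
  exact: qg.
have dUI : (S0 :|: S1) :&: I = set0.
  apply/setP => A; rewrite !inE; apply/negP => /andP[/orP h /imsetP[A0 hA0 EA]].
  have xA : x \in A by rewrite EA setU11.
  case: h => h.
    by have := shat_const c0 xA; rewrite h.
  by have := shat_const c1 xA; rewrite h.
have := cardsUI (S0 :|: S1) I; rewrite dUI cards0 addn0 => E1.
have := cardsUI S0 S1 => E2.
have sUI : S0 :|: S1 :|: I \subset S by rewrite subUset sU sI.
have := subset_leq_card sUI.
move=> h; rewrite cP; move: IH0 IH1 E1 E2 cI h; rewrite -/S0 -/S1; lia.
Qed.
End Pajor.

Lemma card_small (Pt : finType) d :
  #|[set A : {set Pt} | (#|A| <= d)%N]| = (\sum_(i < d.+1) 'C(#|Pt|, i))%N.
Proof.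
elim: d => [|d IH].
  by rewrite big_ord1 -card_draws; apply: eq_card => A; rewrite !inE leqn0.
rewrite big_ord_recr /= -IH -card_draws.
rewrite -(cardsID [set A : {set Pt} | (#|A| <= d)%N] [set A : {set Pt} | (#|A| <= d.+1)%N]).
congr (_ + _)%N; apply: eq_card => A;
  rewrite !inE; apply/idP/idP; lia.
Qed.

Lemma binom_bound (n d : nat) (t : R) : 0 < t <= 1 ->
  (\sum_(i < d.+1) 'C(n, i))%:R * t ^+ d <= (t + 1) ^+ n.
Proof.
case/andP=> t0 t1.
set F := fun i : nat => t ^+ i *+ 'C(n, i).
have F0 : forall i, 0 <= F i by move=> i; rewrite /F mulrn_wge0 // exprn_ge0 // ltW.
rewrite exprD1n natr_sum mulr_suml.
apply: (@le_trans _ _ (\sum_(i < d.+1) F i)).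
  apply: ler_sum => i _; rewrite mulrC mulr_natr /F lerMn2r; apply/orP; right.
  by apply: ler_wiXn2l => //; [exact: ltW | rewrite -ltnS].
rewrite (big_ord_widen (d.+1 + n) F (leq_addr _ _)).
apply: (@le_trans _ _ (\sum_(i < d.+1 + n) F i)).
  rewrite [X in _ <= X](bigID (fun i : 'I_(d.+1 + n) => (i < d.+1)%N)) /= lerDl.
  by apply: sumr_ge0 => i _.
rewrite (big_ord_widen (d.+1 + n) F (_ : n.+1 <= d.+1 + n)%N); last by lia.
rewrite [X in X <= _](bigID (fun i : 'I_(d.+1 + n) => (i < n.+1)%N)) /=.
rewrite [X in _ + X]big1 ?addr0 // => i; rewrite -leqNgt => hi.
by rewrite /F bin_small ?mulr0n.
Qed.

Lemma numeric (M d : nat) : (1 <= d)%N -> (300 * d <= M)%N ->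
  7 * (\sum_(i < d.+1) 'C(M * 2, i))%:R * (2^-1) ^+ (M %/ 8) <= 3^-1 :> R.
Proof.
move=> d1 dM.
set Phi : R := (\sum_(i < d.+1) 'C(M * 2, i))%:R.
set k := (M %/ 8)%N.
have hB := @binom_bound (M * 2) d (64^-1)%R.
have hPhi : Phi <= 64 ^+ d * (65/64) ^+ (M * 2).
  have H : Phi * 64^-1 ^+ d <= (65/64) ^+ (M * 2).
    rewrite (_ : 65/64 = 64^-1 + 1); last by lra.
    by apply: hB; apply/andP; split; lra.
  have e : 64^-1 ^+ d * 64 ^+ d = 1 :> R.
    rewrite -exprMn mulVf ?expr1n //; lra.
  have -> : Phi = 64 ^+ d * (Phi * 64^-1 ^+ d).
    by rewrite mulrA mulrC mulrA e mul1r.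
  by apply: ler_wpM2l => //; exact: exprn_ge0.
have Mk : (M * 2 <= 16 * k.+1)%N.
  have := ltn_ceil M (isT : (0 < 8)%N); rewrite -/k; lia.
have kd : (37 * d <= k)%N.
  rewrite /k; apply: (@leq_trans ((300 * d) %/ 8)); last exact: leq_div2r.
  rewrite leq_divRL //; lia.
have u1 : (65/64) ^+ 16 <= 13/10 :> R by rewrite !exprS expr0; lra.
have h1 : (65/64) ^+ (M * 2) <= (13/10) ^+ k.+1 :> R.
  apply: (@le_trans _ _ ((65/64) ^+ (16 * k.+1))).
    by rewrite ler_eXn2l //; lra.
  rewrite exprM; apply: lerXn2r => //; rewrite ?qualifE //=; try lra.
have h2 : 64 * (13/20) ^+ 37 <= 100^-1 :> R by rewrite !exprS expr0; lra.
have h3 : (13/20) ^+ k <= (13/20) ^+ (37 * d) :> R.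
  by apply: ler_wiXn2l => //; lra.
have h4 : 64 ^+ d * (13/20) ^+ (37 * d) <= 100^-1 :> R.
  rewrite exprM -exprMn.
  apply: (@le_trans _ _ ((100^-1) ^+ d)).
    apply: lerXn2r => //; rewrite ?qualifE //=; try lra.
  rewrite -(prednK d1) exprS ger_pMr; last lra.
  by apply: exprn_ile1; lra.
have e0 : 0 <= (13/20) ^+ k :> R by rewrite exprn_ge0 //; lra.
have e1 : 0 <= 64 ^+ d :> R by rewrite exprn_ge0.
have e2 : 0 <= (65/64) ^+ (M * 2) :> R by rewrite exprn_ge0 //; lra.
have e3 : 0 <= (2^-1) ^+ k :> R by rewrite exprn_ge0 //; lra.
have hk : (13/10) ^+ k.+1 * (2^-1) ^+ k = 13/10 * (13/20) ^+ k :> R.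
  by rewrite exprS -mulrA -exprMn; congr (_ * _ ^+ _); lra.
apply: (@le_trans _ _ (7 * (64 ^+ d * (13/10) ^+ k.+1) * (2^-1) ^+ k)).
  apply: ler_wpM2r => //; apply: ler_wpM2l; first lra.
  apply: (le_trans hPhi); exact: ler_wpM2l.
rewrite -mulrA -mulrA hk.
have := ler_wpM2l e1 h3.
lra.
Qed.

Lemma exp_mono (x y : R) : x <= y -> exp x <= exp y.
Proof.
rewrite le_eqVlt => /orP[/eqP->//|/RltP h]; apply/ltW/RltP; exact: exp_increasing.
Qed.
Lemma exp1_le3 : exp 1 <= 3.
Proof.
have h : IZR 3 = 3 by rewrite IZRposE INRE.
by have h3 := exp_le_3; move/RleP: h3; rewrite h.
Qed.
Lemma exp_nat n : exp n%:R <= 3 ^+ n.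
Proof.
elim: n => [|n IH].
  rewrite mulr0n expr0; have -> : exp 0 = 1 by exact: exp_0. by [].
rewrite exprSr -addn1 natrD exp_plus.
apply: ler_pM => //.
- apply: ltW; apply/RltP; exact: exp_pos.
- apply: ltW; apply/RltP; exact: exp_pos.
- exact: exp1_le3.
Qed.
Lemma final_bound (K : nat) (delta : R) : 0 < delta ->
  1 - delta / 2 <= 1 - K%:R * (3^-1) ^+ (inner_iters K delta).
Proof.
move=> d0.
case: K => [|K]; first by rewrite mul0r; lra.
set L := inner_iters K.+1 delta.
set y := 2 * K.+1%:R / delta.
set x := ln y.
have hy : 0 < y by apply: divr_gt0 => //; rewrite mulr_gt0 // ltr0n.
have hL : x <= L%:R.
  case: (lerP x 0) => hx0; first exact: (le_trans hx0 (ler0n _ _)).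
  have c0 : 0 <= Num.ceil x by rewrite ceil_ge0; lra.
  rewrite /L /inner_iters -/y -/x natr_absz ger0_norm //; exact: ceil_ge.
have h3 : exp x <= 3 ^+ L := le_trans (exp_mono hL) (exp_nat L).
rewrite /x exp_ln in h3; last by apply/RltP.
have P0 : 0 < 3 ^+ L :> R by rewrite exprn_gt0.
rewrite exprVn lerD2l lerN2 ler_pdivrMr //.
move: h3; rewrite /y ler_pdivrMr // => h3.
have -> : delta / 2 * 3 ^+ L = (3 ^+ L * delta) / 2.
  by rewrite mulrAC [delta * _]mulrC.
rewrite ler_pdivlMr; last by rewrite ltr0n.
by rewrite mulrC.
Qed.

Section EpsNet.
Variables (m M d : nat) (D : 'I_m -> R) (E : ('I_m -> bool) -> Prop).
Hypothesis dD : distr D.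
Definition shattI (A : {set 'I_m}) :=
  forall g : 'I_m -> bool, exists e, E e /\ forall i, i \in A -> e i = g i.
Hypothesis VC : forall A, shattI A -> (#|A| <= d)%N.

Local Notation Samp := {ffun 'I_M -> 'I_m}.
Definition wS (S : Samp) : R := \prod_(j < M) D (S j).
Definition massD (e : 'I_m -> bool) : R := \sum_i D i * (e i)%:R.
Definition kk := (M %/ 8)%N.
Definition Cb (x : Samp * Samp) : bool :=
  `[< exists e, E e /\ (forall j, e (x.1 j) = false) /\
      (kk <= \sum_(j < M) nat_of_bool (e (x.2 j)))%N >].

Lemma wS_ge0 S : 0 <= wS S. Proof. exact: wt_ge0. Qed.
Lemma wS_sum : \sum_S wS S = 1. Proof. exact: wt_sum. Qed.

Lemma step1 (B : pred Samp) : (0 < M)%N ->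
  (forall S, B S -> exists e, E e /\ (forall j, e (S j) = false) /\ 1/4 < massD e) ->
  \sum_S wS S * (B S)%:R <= 7 * \sum_(x : Samp * Samp) wS x.1 * wS x.2 * (Cb x)%:R.
Proof.
move=> M0 HB.
rewrite -(pair_bigA _ (fun S T => wS S * wS T * (Cb (S, T))%:R)) /= mulr_sumr.
apply: ler_sum => S _.
under [Y in _ <= 7 * Y]eq_bigr do rewrite -mulrA.
rewrite -mulr_sumr mulrCA.
apply: ler_wpM2l; first exact: wS_ge0.
case BS: (B S); last first.
  rewrite /= mulr_ge0 //; apply: sumr_ge0 => T _; rewrite mulr_ge0 //; exact: wS_ge0.
have [e [Ee [eS pe]]] := HB S BS.
set cnt := fun T : Samp => (\sum_(j < M) nat_of_bool (e (T j)))%N.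
have cntM : forall T, (cnt T <= M)%N.
  move=> T; rewrite /cnt; apply: (@leq_trans (\sum_(j < M) 1)%N).
    by apply: leq_sum => j _; exact: leq_b1.
  by rewrite sum_nat_const card_ord muln1.
set X := \sum_T wS T * (nat_of_bool (cnt T < kk)%N)%:R.
have X0 : 0 <= X by apply: sumr_ge0 => T _; rewrite mulr_ge0 // wS_ge0.
have hsum : \sum_T wS T * (cnt T)%:R = M%:R * massD e.
  under eq_bigr do rewrite /cnt natr_sum mulr_sumr.
  rewrite exchange_big /=.
  under eq_bigr do rewrite (wt_marg (fun i => (e i)%:R) _ dD).
  by rewrite (eq_bigr (fun _ => massD e)) // sumr_const (_ : #|xpredT| = M) ?card_ord // mulr_natl.
have kM : (kk <= M)%N by rewrite /kk; apply: leq_div.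
have hX : (M - kk)%:R * X <= M%:R * (1 - massD e).
  apply: (@le_trans _ _ (\sum_T wS T * (M%:R - (cnt T)%:R))).
    rewrite /X mulr_sumr; apply: ler_sum => T _; rewrite mulrCA.
    apply: ler_wpM2l; first exact: wS_ge0.
    case: ltnP => h /=.
      rewrite mulr1 -natrB ?cntM // ler_nat; lia.
    by rewrite mulr0 subr_ge0 ler_nat cntM.
  under eq_bigr do rewrite mulrBr.
  by rewrite sumrB hsum -mulr_suml wS_sum mul1r mulrBr mulr1.
have hY : 1 - X <= \sum_T wS T * (Cb (S, T))%:R.
  apply: (@le_trans _ _ (\sum_T wS T * (1 - (nat_of_bool (cnt T < kk)%N)%:R))).
    under eq_bigr do rewrite mulrBr mulr1.
    by rewrite sumrB wS_sum.
  apply: ler_sum => T _; apply: ler_wpM2l; first exact: wS_ge0.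
  case: ltnP => h /=; first by rewrite subrr.
  have -> : Cb (S, T) = true.
    by apply/asboolP; exists e; split => //; split => //.
  by rewrite subr0.
have M8 : (8 * kk <= M)%N by rewrite /kk mulnC leq_trunc_div.
have hK : 7 * M%:R <= 8 * (M - kk)%:R :> R.
  rewrite -!natrM ler_nat; lia.
have Mpos : 0 < M%:R :> R by rewrite ltr0n.
have X67 : X <= 6/7.
  rewrite -(ler_pM2l Mpos).
  have h2 : 0 <= (8 * (M - kk)%:R - 7 * M%:R) * X.
    by apply: mulr_ge0 => //; rewrite subr_ge0.
  have h3 : 0 < M%:R * (massD e - 1/4).
    by apply: mulr_gt0 => //; rewrite subr_gt0.
  lra.
rewrite /=; lra.
Qed.

Definition swp (s : {ffun 'I_M -> bool}) (x : Samp * Samp) : Samp * Samp :=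
  ([ffun j => if s j then x.2 j else x.1 j], [ffun j => if s j then x.1 j else x.2 j]).

Lemma swpK s : involutive (swp s).
Proof.
move=> [S T]; rewrite /swp /=; congr pair; apply/ffunP => j; rewrite !ffunE;
  by case: (s j).
Qed.

Lemma swp_w s x : wS (swp s x).1 * wS (swp s x).2 = wS x.1 * wS x.2.
Proof.
rewrite /wS -!big_split /=; apply: eq_bigr => j _; rewrite !ffunE.
by case: (s j) => //; exact: mulrC.
Qed.

Definition hw (s : {ffun 'I_M -> bool}) : R := \prod_(j < M) 2^-1.

Lemma hw_ge0 s : 0 <= hw s.
Proof. by apply: prodr_ge0 => j _; rewrite invr_ge0. Qed.

Lemma hw_sum : \sum_s hw s = 1.
Proof.
rewrite /hw -(bigA_distr_bigA (fun (j : 'I_M) (b : bool) => 2^-1)) /=.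
by rewrite big1 // => j _; rewrite big_bool /=; lra.
Qed.

Definition Zp (x : Samp * Samp) (p : 'I_M * bool) : 'I_m :=
  if p.2 then x.2 p.1 else x.1 p.1.
Definition Pset x : {set {ffun 'I_M * bool -> bool}} :=
  [set q : {ffun 'I_M * bool -> bool} | `[< exists e, E e /\ forall p, q p = e (Zp x p) >]].
Definition cond (q : {ffun 'I_M * bool -> bool}) (s : {ffun 'I_M -> bool}) : bool :=
  [forall j, ~~ q (j, s j)] && (kk <= \sum_(j < M) nat_of_bool (q (j, ~~ s j)))%N.

Lemma Cb_swp s x : Cb (swp s x) -> exists2 q, q \in Pset x & cond q s.
Proof.
move/asboolP => [e [Ee [h1 h2]]]; exists [ffun p => e (Zp x p)].
  by rewrite inE; apply/asboolP; exists e; split => // p; rewrite ffunE.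
apply/andP; split.
  apply/forallP => j; rewrite ffunE /Zp /=; have := h1 j; rewrite /swp /= ffunE.
  by case: (s j) => ->.
move: h2; rewrite /swp /=; congr (_ <= _)%N; apply: eq_bigr => j _.
by rewrite !ffunE /Zp /=; case: (s j).
Qed.

Lemma cond_bound q : \sum_s hw s * (cond q s)%:R <= (2^-1) ^+ kk.
Proof.
set cJ := fun j : 'I_M => nat_of_bool (q (j, false) || q (j, true)).
set nJ := (\sum_(j < M) cJ j)%N.
have hcnt : forall s : {ffun 'I_M -> bool},
    (\sum_(j < M) nat_of_bool (q (j, ~~ s j)) <= nJ)%N.
  move=> s; apply: leq_sum => j _; rewrite /cJ.
  by case: (s j); case: (q (j, false)); case: (q (j, true)).
case: (leqP kk nJ) => hk; last first.
  rewrite big1 ?exprn_ge0 ?invr_ge0 // => s _.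
  have -> : cond q s = false.
    apply/negbTE/negP => /andP[_ h]; have := hcnt s; lia.
  by rewrite mulr0.
apply: (@le_trans _ _ (\sum_(s : {ffun 'I_M -> bool}) \prod_(j < M) (2^-1 * (nat_of_bool (~~ q (j, s j)))%:R))).
  apply: ler_sum => s _; rewrite /hw; case C: (cond q s).
    move: C => /andP[/forallP H _]; rewrite mulr1.
    by rewrite (eq_bigr (fun j => 2^-1 * (nat_of_bool (~~ q (j, s j)))%:R)) // => j _; rewrite (H j) mulr1.
  rewrite mulr0; apply: prodr_ge0 => j _; apply: mulr_ge0; rewrite ?invr_ge0 //.
rewrite -(bigA_distr_bigA (fun j b => 2^-1 * (nat_of_bool (~~ q (j, b)))%:R)) /=.
apply: (@le_trans _ _ (\prod_(j < M) (2^-1) ^+ cJ j)).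
  apply: ler_prod => j _; rewrite big_bool /= /cJ.
  by case: (q (j, false)); case: (q (j, true)); rewrite /= ?expr1 ?expr0; apply/andP; split; lra.
rewrite prodrXr; apply: ler_wiXn2l => //; lra.
Qed.

Lemma per_x x : \sum_s hw s * (Cb (swp s x))%:R <= #|Pset x|%:R * (2^-1) ^+ kk.
Proof.
apply: (@le_trans _ _ (\sum_s hw s * \sum_(q in Pset x) (cond q s)%:R)).
  apply: ler_sum => s _; apply: ler_wpM2l; first exact: hw_ge0.
  case Cs: (Cb (swp s x)); last by apply: sumr_ge0.
  have [q qP cq] := Cb_swp Cs.
  rewrite (bigD1 q) //= cq lerDl; exact: sumr_ge0.
under eq_bigr do rewrite mulr_sumr.
rewrite exchange_big /=.
apply: (@le_trans _ _ (\sum_(q in Pset x) (2^-1) ^+ kk)).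
  by apply: ler_sum => q _; exact: cond_bound.
by rewrite sumr_const mulr_natl.
Qed.

Lemma Pset_card x : (#|Pset x| <= \sum_(i < d.+1) 'C(M * 2, i))%N.
Proof.
apply: (leq_trans (pajor (Pset x))).
have cc : #|{: 'I_M * bool}| = (M * 2)%N by rewrite card_prod card_ord card_bool.
rewrite -cc -card_small.
apply: subset_leq_card; apply/subsetP => A; rewrite !inE => /forallP hA.
have inj : {in A &, injective (Zp x)}.
  move=> p1 p2 h1 h2 E12; apply/eqP; apply/negP => /negP ne.
  have /existsP[q /andP[qP /forallP qg]] := hA [ffun p => p == p1].
  move: qP; rewrite inE => /asboolP[e [_ qe]].
  have ne' : (p2 == p1) = false by rewrite eq_sym; exact: negbTE.
  have := qg p1; have := qg p2; rewrite h1 h2 !ffunE eqxx /= ne' !qe E12.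
  by move=> /eqP -> /eqP.
rewrite -(card_in_imset inj); apply: VC => g.
have /existsP[q /andP[qP /forallP qg]] := hA [ffun p => g (Zp x p)].
move: qP; rewrite inE => /asboolP[e [Ee qe]].
exists e; split => // i /imsetP[p pA ->].
by have := qg p; rewrite pA ffunE qe => /eqP.
Qed.

Lemma W_sum : \sum_(x : Samp * Samp) wS x.1 * wS x.2 = 1.
Proof.
rewrite -(pair_bigA _ (fun S T => wS S * wS T)) /=.
under eq_bigr do rewrite -mulr_sumr wS_sum mulr1.
exact: wS_sum.
Qed.

Lemma step2 : \sum_(x : Samp * Samp) wS x.1 * wS x.2 * (Cb x)%:R
   <= (\sum_(i < d.+1) 'C(M * 2, i))%:R * (2^-1) ^+ kk.
Proof.
set Phi : R := (\sum_(i < d.+1) 'C(M * 2, i))%:R.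
set F := fun x : Samp * Samp => wS x.1 * wS x.2 * (Cb x)%:R.
have -> : \sum_x F x = \sum_(s : {ffun 'I_M -> bool}) hw s * \sum_x F x.
  by rewrite -mulr_suml hw_sum mul1r.
have e1 : forall s, \sum_x F x = \sum_x wS x.1 * wS x.2 * (Cb (swp s x))%:R.
  move=> s; rewrite (reindex_inj (can_inj (swpK s))) /=.
  by apply: eq_bigr => x _; rewrite /F swp_w.
under eq_bigr => s _ do rewrite (e1 s) mulr_sumr.
rewrite exchange_big /=.
apply: (@le_trans _ _ (\sum_(x : Samp * Samp) wS x.1 * wS x.2 * (Phi * (2^-1) ^+ kk))).
  apply: ler_sum => x _.
  under eq_bigr do rewrite mulrCA.
  rewrite -mulr_sumr; apply: ler_wpM2l; first by rewrite mulr_ge0 // wS_ge0.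
  apply: (le_trans (per_x x)); apply: ler_wpM2r; first by rewrite exprn_ge0 // invr_ge0.
  by rewrite ler_nat Pset_card.
by rewrite -mulr_suml W_sum mul1r.
Qed.

Lemma epsnet (B : pred Samp) : (1 <= d)%N -> (300 * d <= M)%N ->
  (forall S, B S -> exists e, E e /\ (forall j, e (S j) = false) /\ 1/4 < massD e) ->
  \sum_S wS S * (B S)%:R <= 3^-1.
Proof.
move=> d1 dM HB.
have M0 : (0 < M)%N by lia.
apply: (le_trans (step1 M0 HB)).
apply: le_trans (numeric d1 dM).
rewrite -mulrA; apply: ler_wpM2l; first lra.
exact: step2.
Qed.
End EpsNet.

Lemma vc_transfer m (U : eqType) (dom : U -> Prop) (H : (U -> bool) -> Prop) d
  (phi : 'I_m -> U) (b : 'I_m -> bool) (E : ('I_m -> bool) -> Prop) :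
  VCdim_is dom H d -> (forall i, dom (phi i)) ->
  (forall e, E e -> exists h, H h /\ forall i, e i = (h (phi i) != b i)) ->
  forall A : {set 'I_m}, shattI E A -> (#|A| <= d)%N.
Proof.
move=> [_ Hd] hdom HE A hA.
have inj : {in enum A &, injective phi}.
  move=> i i' hi hi' E12; apply/eqP; apply/negP => /negP ne.
  rewrite !mem_enum in hi hi'.
  have [e [Ee he]] := hA (fun x => (x == i) != b x).
  have [h [_ hh]] := HE e Ee.
  have ne' : (i' == i) = false by rewrite eq_sym; exact: negbTE.
  have := he i hi; have := he i' hi'; rewrite !hh E12 eqxx ne' /=.
  by case: (h (phi i')); case: (b i); case: (b i').
apply: (@leq_trans (size (map phi (enum A)))); first by rewrite size_map cardE.
apply: Hd; split.
- by rewrite map_inj_in_uniq ?enum_uniq.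
- by move=> u /mapP[i _ ->]; exact: hdom.
- move=> lab; have [e [Ee he]] := hA (fun i => lab (phi i) != b i).
  have [h [Hh hh]] := HE e Ee; exists h; split => // u /mapP[i hi ->].
  rewrite mem_enum in hi; have := he i hi; rewrite hh.
  by case: (h (phi i)); case: (lab (phi i)); case: (b i).
Qed.

Lemma e2e_CoT T g g' x : (0 < T)%N -> CoT T g x = CoT T g' x -> e2e T g x = e2e T g' x.
Proof.
move=> T0 h.
have hi : (T.-1 < T)%N by rewrite ltn_predL.
have := congr1 (fun t => tnth t (Ordinal hi)) h.
by rewrite /CoT !tnth_mktuple /= prednK.
Qed.

Lemma hq_generic m M d (D : 'I_m -> R) (E : ('I_m -> bool) -> Prop)
  (B : pred {ffun 'I_M -> 'I_m}) :
  distr D -> (forall A, shattI E A -> (#|A| <= d)%N) -> E (fun _ => false) ->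
  (300 * d <= M)%N ->
  (forall S, B S -> exists e, E e /\ (forall j, e (S j) = false) /\ 1/4 < massD D e) ->
  \sum_(S : {ffun 'I_M -> 'I_m}) (\prod_(j < M) D (S j)) * (B S)%:R <= 3^-1.
Proof.
move=> dD VC E0 dM HB.
case: (posnP d) => [d0|d1]; last exact: (epsnet dD VC d1 dM HB).
have ez : forall e, E e -> forall i, e i = false.
  move=> e Ee i; apply/negP => ei.
  have : shattI E [set i].
    move=> g; case gi: (g i).
      by exists e; split => // j; rewrite inE => /eqP ->; rewrite gi.
    by exists (fun _ => false); split => // j; rewrite inE => /eqP ->; rewrite gi.
  by move/VC; rewrite cards1 d0.
rewrite big1; first lra.
move=> S _; case BS: (B S); last by rewrite mulr0.
have [e [Ee [_ pe]]] := HB S BS.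
have : massD D e = 0 by rewrite /massD big1 // => i _; rewrite ez // mulr0.
move=> h; rewrite h in pe; lra.
Qed.

Lemma budget_ge (c : R) d : 300%:R <= c -> (300 * d <= budget c d)%N.
Proof.
move=> hc; rewrite /budget.
have h : 0 <= c * d%:R by rewrite mulr_ge0 // (le_trans _ hc).
have c0 : 0 <= Num.ceil (c * d%:R) by rewrite ceil_ge0; lra.
rewrite -(ler_nat R) natr_absz ger0_norm // natrM.
apply: (le_trans _ (ceil_ge _)); apply: ler_wpM2r => //.
Qed.

Theorem lemma9p4 :
  exists c : R, 0 < c /\
  forall (X : seq bool -> Prop) (F : (seq bool -> bool) -> Prop)
         (T m K : nat) (xs : 'I_m -> seq bool) (ys : 'I_m -> bool)
         (fstar : seq bool -> bool) (delta : R),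
    (0 < T)%N -> (0 < m)%N ->
    (forall i, X (xs i)) ->
    F fstar -> (forall i, ys i = e2e T fstar (xs i)) ->
    0 < delta < 1 ->
    (* adaptive adversary (may depend on the current sample set) *)
    (forall d : nat, VCdim_is X (e2e_class T F) d ->
     forall (adv : history m (budget c d) T -> sample m (budget c d) ->
                   (seq bool -> bool))
            (lrn : history m (budget c d) T -> sample m (budget c d) ->
                   observation (budget c d) T -> (seq bool -> bool)),
       (forall hist (S : sample m (budget c d)), F (adv hist S) /\
          forall x, X x -> e2e T (adv hist S) x = e2e T fstar x) ->
       (forall hist (S : sample m (budget c d)) (o : observation (budget c d) T),
          (exists g, F g /\ forall j, CoT T g (xs (S j)) = o j) ->
          F (lrn hist S o) /\ forall j, CoT T (lrn hist S o) (xs (S j)) = o j) ->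
       1 - delta / 2 <=
         boost_success_prob xs ys adv lrn (inner_iters K delta) K)
    /\
    (* relaxed protocol: f_{k,l} fixed before S_{k,l} is observed *)
    (forall d : nat, VCdim_is (fun p => X p.1) (Lcot_class T F) d ->
     forall (adv : history m (budget c d) T -> sample m (budget c d) ->
                   (seq bool -> bool))
            (lrn : history m (budget c d) T -> sample m (budget c d) ->
                   observation (budget c d) T -> (seq bool -> bool)),
       (forall hist (S S' : sample m (budget c d)), adv hist S = adv hist S') ->
       (forall hist (S : sample m (budget c d)), F (adv hist S) /\
          forall x, X x -> e2e T (adv hist S) x = e2e T fstar x) ->
       (forall hist (S : sample m (budget c d)) (o : observation (budget c d) T),
          (exists g, F g /\ forall j, CoT T g (xs (S j)) = o j) ->
          F (lrn hist S o) /\ forall j, CoT T (lrn hist S o) (xs (S j)) = o j) ->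
       1 - delta / 2 <=
         boost_success_prob xs ys adv lrn (inner_iters K delta) K).
Proof.
exists 300%:R; split; first by rewrite ltr0n.
move=> X F T m K xs ys fstar delta T0 m0 hX Ffs hys hdelta.
have d0 : 0 < delta by case/andP: hdelta.
have Du : distr (fun _ : 'I_m => 1 / m%:R).
  split => [i|]; first by rewrite divr_ge0 // ler0n.
  rewrite sumr_const (_ : #|xpredT| = m) ?card_ord // -mulr_natr.
  have hm : m%:R != 0 :> R by rewrite pnatr_eq0 -lt0n.
  by field.
have q0 : 0 <= 3^-1 :> R by rewrite invr_ge0.
split.
- move=> d hVC adv lrn hadv hlrn.
  apply: (le_trans (final_bound K d0)).
  rewrite /boost_success_prob; apply: (outer_lb q0) => // D hist dD.
  set E1 := fun e : 'I_m -> bool => exists g, F g /\ forall i, e i = (e2e T g (xs i) != ys i).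
  apply: (@hq_generic m _ d D E1) => //.
  + apply: (vc_transfer hVC hX) => e [g [Fg he]].
    by exists (e2e T g); split => //; exists g.
  + by exists fstar; split => // i; rewrite hys eqxx.
  + exact: budget_ge.
  move=> S; rewrite /badS -ltNge => bad.
  set fh := lrn hist S (obs xs adv hist S).
  have [Ffh hfh] : F fh /\ forall j, CoT T fh (xs (S j)) = obs xs adv hist S j.
    apply: hlrn; exists (adv hist S); split; first exact: (hadv hist S).1.
    by move=> j; rewrite ffunE.
  exists (fun i => e2e_err T xs ys fh i); split; first by exists fh.
  split => // j; rewrite /e2e_err.
  have := hfh j; rewrite ffunE => hc.
  by rewrite (e2e_CoT T0 hc) (hadv hist S).2 // hys eqxx.
- move=> d hVC adv lrn hind hadv hlrn.
  apply: (le_trans (final_bound K d0)).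
  rewrite /boost_success_prob; apply: (outer_lb q0) => // D hist dD.
  have S0 : sample m (budget 300%:R d) := [ffun _ => Ordinal m0].
  set f0 := adv hist S0.
  set E2 := fun e : 'I_m -> bool =>
    exists g, F g /\ forall i, e i = (CoT T f0 (xs i) != CoT T g (xs i)).
  apply: (@hq_generic m _ d D E2) => //.
  + apply: (@vc_transfer m _ _ _ d (fun i => (xs i, CoT T f0 (xs i))) (fun _ => false) E2 hVC) => //.
    move=> e [g [Fg he]].
    exists (fun p : seq bool * T.-tuple bool => p.2 != CoT T g p.1); split.
      by exists g.
    by move=> i; rewrite he /=; case: (_ != _).
  + by exists f0; split; [exact: (hadv hist S0).1 | move=> i; rewrite eqxx].
  + exact: budget_ge.
  move=> S; rewrite /badS -ltNge => bad.
  set fh := lrn hist S (obs xs adv hist S).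
  have [Ffh hfh] : F fh /\ forall j, CoT T fh (xs (S j)) = obs xs adv hist S j.
    apply: hlrn; exists (adv hist S); split; first exact: (hadv hist S).1.
    by move=> j; rewrite ffunE.
  exists (fun i => CoT T f0 (xs i) != CoT T fh (xs i)); split; first by exists fh.
  split.
    move=> j; have := hfh j; rewrite ffunE (hind hist S S0) -/f0 => ->.
    by rewrite eqxx.
  apply: (lt_le_trans bad); apply: ler_sum => i _.
  apply: ler_wpM2l; first exact: dD.1.
  case E: (e2e_err T xs ys fh i); last by rewrite /= ler0n.
  have -> : (CoT T f0 (xs i) != CoT T fh (xs i)) = true.
    apply/negP => /eqP hc; move: E; rewrite /e2e_err -(e2e_CoT T0 hc).
    by rewrite /f0 (hadv hist S0).2 // hys eqxx.
  by [].
Qed.
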